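(* Let $l$ be a projective line in $\mathbb{CP}^3$. Then $l$ corresponds to a two-sphere (or a point) contained in the three-sphere $S^3$ if and only if $l=l^\perp$ with respect to the hermitian form $h$ on $\mathbb{C}^4$.
   Context: $\mathbb{H}$ denotes the quaternions, $\mathbb{H}=\mathbb{C}\oplus j\mathbb{C}$; $\mathbb{H}^2$ is a right $\mathbb{H}$-vector space identified with $\mathbb{C}^4$; $\mathbb{HP}^1=\{v\mathbb{H}\}\cong S^4$, $\mathbb{CP}^3=\mathbb{P}(\mathbb{C}^4)$. Under the twistor projection $v\mathbb{C}\mapsto v\mathbb{H}$, each projective line of $\mathbb{CP}^3$ is either a twistor fibre (the line through $[v],[vj]$, corresponding to the point $v\mathbb{H}$) or the twistor lift of a round two-sphere, whose image under the projection is that two-sphere. Fix an $\mathbb{H}$-basis $e_1,e_2$ and the quaternionic hermitian form $\mathfrak{h}(e_1a+e_2b,e_1c+e_2d)=\bar a d+\bar b c$; write $\mathfrak{h}=h+j\omega$ with $h,\omega$ $\mathbb{C}$-valued; $h$ is a hermitian form on $\mathbb{C}^4$. $S^3=\{x\mathbb{H}:\mathfrak{h}(x,x)=0\}$. For a projective line $l$, $l^\perp=\mathbb{P}\{x:h(x,y)=0\ \forall y\in l\}$. A line ''corresponds to a two-sphere or point contained in $S^3$'' if its image under the twistor projection is contained in $S^3$. *)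

(* Defs.v *)
From HB Require Import structures.
From mathcomp Require Import all_boot all_order all_algebra.
Set Implicit Arguments. Unset Strict Implicit. Unset Printing Implicit Defensive.
Import Order.TTheory GRing.Theory Num.Theory.
Local Open Scope ring_scope.

(* The complex numbers are modelled by an arbitrary numeric closed field C
   (a field with a conjugation x^*, e.g. the complex numbers themselves). *)

(* Quaternions H = C (+) jC : the pair (z, w) stands for z + j w,
   with j^2 = -1 and z j = j z^*. *)
Definition quat (C : numClosedFieldType) : Type := (C * C)%type.

Definition qzero (C : numClosedFieldType) : quat C := (0, 0).
Definition qadd (C : numClosedFieldType) (p q : quat C) : quat C :=
  (p.1 + q.1, p.2 + q.2).
(* (z1 + j w1)(z2 + j w2) = (z1 z2 - w1^* w2) + j (z1^* w2 + w1 z2) *)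
Definition qmul (C : numClosedFieldType) (p q : quat C) : quat C :=
  (p.1 * q.1 - p.2^* * q.2, p.1^* * q.2 + p.2 * q.1).
(* conj (z + j w) = z^* - j w *)
Definition qconj (C : numClosedFieldType) (p : quat C) : quat C :=
  (p.1^*, - p.2).

(* H^2 as a right H-vector space: pairs (a, b) = e1 a + e2 b. *)
Definition H2 (C : numClosedFieldType) : Type := (quat C * quat C)%type.
Definition H2zero (C : numClosedFieldType) : H2 C := (qzero C, qzero C).
Definition H2scale (C : numClosedFieldType) (x : H2 C) (q : quat C) : H2 C :=
  (qmul x.1 q, qmul x.2 q).

(* quaternionic hermitian form  h(e1 a + e2 b, e1 c + e2 d) = a^- d + b^- c *)
Definition hq (C : numClosedFieldType) (x y : H2 C) : quat C :=
  qadd (qmul (qconj x.1) y.2) (qmul (qconj x.2) y.1).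

(* identification C^4 = H^2 : (v0,v1,v2,v3) |-> e1 (v0 + j v1) + e2 (v2 + j v3);
   right multiplication by C is coordinatewise. *)
Definition toH2 (C : numClosedFieldType) (v : 'rV[C]_4) : H2 C :=
  ((v 0 0, v 0 1), (v 0 2%:R, v 0 3%:R)).

(* the C-valued hermitian form h, where hq = h + j omega *)
Definition hC (C : numClosedFieldType) (x y : 'rV[C]_4) : C :=
  (hq (toH2 x) (toH2 y)).1.

(* the quaternionic line x H (a point of HP^1), as a predicate on H^2 *)
Definition qline (C : numClosedFieldType) (x : H2 C) : H2 C -> Prop :=
  fun y => exists q : quat C, y = H2scale x q.

(* the point v H of HP^1 lies in S^3 = { x H : hq(x,x) = 0 } *)
Definition in_S3 (C : numClosedFieldType) (v : H2 C) : Prop :=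
  exists x : H2 C, x <> H2zero C /\ hq x x = qzero C /\
    (forall y, qline x y <-> qline v y).

(* A projective line of CP^3 is the row space of a rank-2 matrix l : 'M_(2,4).
   Its image under the twistor projection v C |-> v H is contained in S^3. *)
Definition twistor_image_in_S3 (C : numClosedFieldType) (l : 'M[C]_(2,4)) : Prop :=
  forall v : 'rV[C]_4, (v <= l)%MS -> v != 0 -> in_S3 (toH2 v).

(* l = l^perp, where l^perp = P{ x : h(x,y) = 0 for all y in l } *)
Definition self_perp (C : numClosedFieldType) (l : 'M[C]_(2,4)) : Prop :=
  forall x : 'rV[C]_4, (x <= l)%MS <-> (forall y : 'rV[C]_4, (y <= l)%MS -> hC x y = 0).

(* Main.v *)
Require Import Defs.
From mathcomp Require Import all_boot all_order all_algebra.
From mathcomp Require Import all_fingroup ring.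
Import GRing.Theory Num.Theory.
Local Open Scope ring_scope.

Definition o0 : 'I_4 := @Ordinal 4 0 isT.
Definition o1 : 'I_4 := @Ordinal 4 1 isT.
Definition o2 : 'I_4 := @Ordinal 4 2 isT.
Definition o3 : 'I_4 := @Ordinal 4 3 isT.
Lemma zero4 : (0 : 'I_4) = o0. Proof. by apply: val_inj. Qed.
Lemma one4 : (1 : 'I_(2.+2)) = o1. Proof. by apply: val_inj. Qed.
Lemma two4 : (2%:R : 'I_(2.+2)) = o2. Proof. by apply: val_inj. Qed.
Lemma three4 : (3%:R : 'I_(2.+2)) = o3. Proof. by apply: val_inj. Qed.
Definition sw : 'S_4 := (tperm o0 o2 * tperm o1 o3)%g.
Lemma swE : [/\ sw o0 = o2, sw o1 = o3, sw o2 = o0 & sw o3 = o1].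
Proof. rewrite /sw !permM !permE /=; split; by apply: val_inj. Qed.

Lemma sum4 (C : numClosedFieldType) (F : 'I_4 -> C) :
  \sum_i F i = F o0 + F o1 + F o2 + F o3.
Proof.
rewrite !big_ord_recl big_ord0 addr0 !addrA.
by congr (F _ + F _ + F _ + F _); apply: val_inj.
Qed.

Section S.
Variable C : numClosedFieldType.
Implicit Types x y z : 'rV[C]_4.

Lemma hCE x y : hC x y = (x 0 o0)^* * y 0 o2 + (x 0 o1)^* * y 0 o3
   + (x 0 o2)^* * y 0 o0 + (x 0 o3)^* * y 0 o1.
Proof.
rewrite /hC /hq /toH2 /qadd /qmul /qconj /=. rewrite two4 three4 zero4 one4.
rewrite !rmorphN; ring.
Qed.

Lemma hC_conj x y : hC y x = (hC x y)^*.
Proof. rewrite !hCE !rmorphD !rmorphM /= !conjCK; ring. Qed.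

Lemma hCDl x y z : hC (x + y) z = hC x z + hC y z.
Proof. rewrite !hCE !mxE !rmorphD /=; ring. Qed.
Lemma hCDr x y z : hC z (x + y) = hC z x + hC z y.
Proof. rewrite !hCE !mxE; ring. Qed.
Lemma hCZl a x y : hC (a *: x) y = a^* * hC x y.
Proof. rewrite !hCE !mxE !rmorphM /=; ring. Qed.
Lemma hCZr a x y : hC x (a *: y) = a * hC x y.
Proof. rewrite !hCE !mxE; ring. Qed.


Lemma hq_diag (v : 'rV[C]_4) : hq (toH2 v) (toH2 v) = (hC v v, 0).
Proof.
rewrite /hC; case E: (hq _ _) => [a b] /=; congr pair; move: E.
rewrite /hq /toH2 /qadd /qmul /qconj /= => -[_ <-].
rewrite ?rmorphN /= ?conjCK; ring.
Qed.

Lemma hq_scale (x : H2 C) q :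
  hq (H2scale x q) (H2scale x q) = qmul (qconj q) (qmul (hq x x) q).
Proof.
case: x => [[a1 a2] [b1 b2]]; case: q => [q1 q2].
rewrite /hq /H2scale /qmul /qconj /qadd /=; congr pair;
rewrite !(rmorphD, rmorphB, rmorphM, rmorphN) /= !conjCK; ring.
Qed.

End S.

Theorem mainTheorem7 (C : numClosedFieldType) (l : 'M[C]_(2,4)) :
  \rank l = 2%N ->
  (twistor_image_in_S3 l <-> self_perp l).
Proof.
move=> rk; split.
- move=> Hs.
  have iso : forall v, (v <= l)%MS -> hC v v = 0.
    move=> v vl; have [->|nz] := eqVneq v 0.
      by rewrite hCE !mxE ?conjC0; ring.
    have [x [_ [hx Hl]]] := Hs v vl nz.
    have : qline x (toH2 v).
      apply/Hl; exists (1, 0).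
      case: (toH2 v) => [[a b] [c d]]; rewrite /H2scale /qmul /= ?conjC0 ?conjC1.
      congr pair; congr pair; ring.
    case=> q e.
    have := @hq_scale _ x q; rewrite -e hx hq_diag /qmul /qzero /qconj /= => -[-> _].
    rewrite rmorph0; ring.
  have pol : forall x y, (x <= l)%MS -> (y <= l)%MS -> hC x y = 0.
    move=> x y xl yl.
    have e1 := iso (x + y) (addmx_sub xl yl).
    have e2 := iso (x + 'i *: y) (addmx_sub xl (scalemx_sub _ yl)).
    rewrite !(hCDl, hCDr, hCZl, hCZr) (iso x xl) (iso y yl) in e1 e2.
    rewrite conjCi in e2.
    have key : forall a b : C, a = 0 -> b = 0 -> 'i * a + b = 0.
      by move=> a b -> ->; ring.
    have h2i : ('i *+ 2 : C) != 0 by rewrite mulrn_eq0 /= neq0Ci.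
    apply: (mulfI h2i); rewrite mulr0 -(key _ _ e1 e2); ring.
  move=> z; split.
    by move=> zl y yl; exact: pol.
  move=> H.
  pose N := \matrix_(i < 4, k < 2) (l k (sw i))^*.
  have NE : forall (w : 'rV[C]_4) k, (w *m N) 0 k = hC (row k l) w.
    move=> w k; rewrite !mxE sum4 hCE !mxE.
    case: swE => -> -> -> ->; ring.
  have zN : (z <= kermx N)%MS.
    apply/sub_kermxP; apply/matrixP => i k.
    by rewrite ord1 NE mxE hC_conj H ?rmorph0 // row_sub.
  have lN : (l <= kermx N)%MS.
    apply/row_subP => i; apply/sub_kermxP; apply/matrixP => a k.
    by rewrite ord1 NE mxE pol ?row_sub.
  have NT : N = (map_mx (@Num.Def.conjC C) (col_perm sw l))^T.
    by apply/matrixP => i k; rewrite !mxE.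
  have rN : \rank N = 2%N.
    by rewrite NT mxrank_tr mxrank_map col_permE mxrankMfree ?row_free_unit ?unitmx_perm.
  have kl : (kermx N <= l)%MS.
    by rewrite -(geq_leqif (mxrank_leqif_sup lN)) mxrank_ker rN rk.
  exact: submx_trans zN kl.
- move=> Hp v vl nz; exists (toH2 v); split; [|split].
  + move=> e; move/eqP: nz; apply; move: e.
    rewrite /toH2 /H2zero /qzero two4 three4 zero4 one4 => -[e0 e1 e2 e3].
    apply/rowP => i; rewrite [RHS]mxE.
    case: i => -[|[|[|[|//]]]] Hi; [rewrite -e0|rewrite -e1|rewrite -e2|rewrite -e3];
      congr (v 0 _); exact: val_inj.
  + by rewrite hq_diag ((Hp v).1 vl v vl).
  + by [].
Qed.
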